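(* Let $\alpha>0$, $\alpha\ne1$. For unitaries $U\in\mathcal{U}(d_1)$ and $V\in\mathcal{U}(d_2)$, $H_\alpha(U\otimes V)=H_\alpha(U)+H_\alpha(V)-(\alpha-1)H_\alpha(U)H_\alpha(V)$, where $H_\alpha(U)$, $H_\alpha(V)$ are computed with the displacement operators of $\mathbb{C}^{d_1}$ and $\mathbb{C}^{d_2}$ respectively, and $H_\alpha(U\otimes V)$ with the displacement operators $D_{\mathbf a_1}\otimes D_{\mathbf a_2}$ of $\mathbb{C}^{d_1}\otimes\mathbb{C}^{d_2}$.
   Context: For a Hilbert space $\mathbb{C}^{d}$ with a fixed family of Weyl–Heisenberg displacement operators $\{D_{\mathbf a}\}$ indexed by a set of size $d^2$ (e.g. $d=d_L^n$, $D_{\mathbf a}=D_{\mathbf a_1}\otimes\cdots\otimes D_{\mathbf a_n}$ with single-qudit $D_{(a_1,a_2)}=\tau^{a_1a_2}X^{a_1}Z^{a_2}$, $Z|k\rangle=e^{2\pi ik/d_L}|k\rangle$, $X|k\rangle=|k+1\rangle$, $\tau=-e^{i\pi/d_L}$), and a unitary $U$ on $\mathbb{C}^d$, set $\mathfrak{C}_{\mathbf{ab}}(U)=\frac1d\operatorname{tr}(D_{\mathbf a}^\dagger UD_{\mathbf b}U^\dagger)$, $\mathfrak{D}_{\mathbf{ab}}(U)=|\mathfrak{C}_{\mathbf{ab}}(U)|^2$, and the $\alpha$-Clifford entropy $H_\alpha(U)=\frac{1}{\alpha-1}\Big(1-\frac{1}{d^2}\sum_{\mathbf a,\mathbf b}\mathfrak{D}_{\mathbf{ab}}(U)^\alpha\Big)$.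 *)

(* Defs.v *)
From HB Require Import structures.
From mathcomp Require Import all_boot all_order all_algebra.
From mathcomp Require Import reals exp trigo.
From mathcomp Require Import complex mxtens.
Set Implicit Arguments. Unset Strict Implicit. Unset Printing Implicit Defensive.
Import Order.TTheory GRing.Theory Num.Theory.
Local Open Scope ring_scope.

Section CliffordEntropy.
Variable R : realType.

Definition adjmx {m n : nat} (A : 'M[R[i]]_(m, n)) : 'M[R[i]]_(n, m) :=
  map_mx (@conjc R) A^T.

Definition unitary {d : nat} (U : 'M[R[i]]_d) : Prop :=
  U *m adjmx U = 1%:M /\ adjmx U *m U = 1%:M.

Definition sqmod (z : R[i]) : R := (@complex.Re R z) ^+ 2 + (@complex.Im R z) ^+ 2.

Definition cliffC {d : nat} {I : finType} (D : I -> 'M[R[i]]_d)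
  (U : 'M[R[i]]_d) (a b : I) : R[i] :=
  (d%:R)^-1 * \tr (adjmx (D a) *m U *m D b *m adjmx U).

Definition cliffD {d : nat} {I : finType} (D : I -> 'M[R[i]]_d)
  (U : 'M[R[i]]_d) (a b : I) : R :=
  sqmod (cliffC D U a b).

Definition cliff_entropy (alpha : R) {d : nat} {I : finType}
  (D : I -> 'M[R[i]]_d) (U : 'M[R[i]]_d) : R :=
  (alpha - 1)^-1 *
    (1 - ((d ^ 2)%:R)^-1 * \sum_(a : I) \sum_(b : I) powR (cliffD D U a b) alpha).

Definition tens_family {d1 d2 : nat} {I1 I2 : finType}
  (D1 : I1 -> 'M[R[i]]_d1) (D2 : I2 -> 'M[R[i]]_d2) :
  (I1 * I2)%type -> 'M[R[i]]_(d1 * d2) :=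
  fun a => D1 a.1 *t D2 a.2.

(* single qudit of local dimension dL:
   Z|k> = e^{2 pi i k/dL}|k>, X|k> = |k+1 mod dL>, tau = - e^{i pi/dL} *)
Definition wh_omega (dL : nat) : R[i] :=
  Complex (cos (2 * pi / dL%:R)) (sin (2 * pi / dL%:R)).
Definition wh_tau (dL : nat) : R[i] :=
  - Complex (cos (pi / dL%:R)) (sin (pi / dL%:R)).

Definition shiftX (dL : nat) : 'M[R[i]]_dL :=
  \matrix_(k, l) ((k : nat) == (l.+1 %% dL)%N)%:R.
Definition clockZ (dL : nat) : 'M[R[i]]_dL :=
  \matrix_(k, l) (((k : nat) == l)%:R * wh_omega dL ^+ k).

Definition mxpow {n : nat} (A : 'M[R[i]]_n) (k : nat) : 'M[R[i]]_n :=
  iter k (mulmx A) 1%:M.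

Definition wh1 (dL : nat) (a : 'I_dL * 'I_dL) : 'M[R[i]]_dL :=
  wh_tau dL ^+ (a.1 * a.2) *: (mxpow (shiftX dL) a.1 *m mxpow (clockZ dL) a.2).

(* multi-qudit system with local dimensions ls = [:: dL_1; ...; dL_n]:
   C^d with d = dL_1 * ... * dL_n, indices a = (a_1, ..., a_n) with a_j in Z_dL_j^2
   (a set of size d^2), and D_a = D_{a_1} (x) ... (x) D_{a_n}. *)
Fixpoint wh_dim (ls : seq nat) : nat :=
  if ls is dL :: ls' then (dL * wh_dim ls')%N else 1%N.

Fixpoint wh_idx (ls : seq nat) : finType :=
  if ls is dL :: ls' then (('I_dL * 'I_dL) * wh_idx ls')%type else unit.

Fixpoint wh (ls : seq nat) : wh_idx ls -> 'M[R[i]]_(wh_dim ls) :=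
  match ls return wh_idx ls -> 'M[R[i]]_(wh_dim ls) with
  | [::] => fun _ => 1%:M
  | dL :: ls' => fun (a : (('I_dL * 'I_dL) * wh_idx ls')%type) =>
      wh1 a.1 *t @wh ls' a.2
  end.

End CliffordEntropy.

(* Main.v *)
Require Import Defs.
From HB Require Import structures.
From mathcomp Require Import all_boot all_order all_algebra.
From mathcomp Require Import reals exp trigo.
From mathcomp Require Import complex mxtens.
From mathcomp Require Import ring.
Import Order.TTheory GRing.Theory Num.Theory.
Local Open Scope ring_scope.

Section Aux.
Variable R : realType.

Lemma tr_tens m n (A : 'M[R[i]]_m) (B : 'M[R[i]]_n) :
  \tr (A *t B) = \tr A * \tr B.
Proof.
rewrite /mxtrace mulr_sum; apply: eq_bigr => k _; by rewrite !mxE.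
Qed.

Lemma adj_tens m n p q (A : 'M[R[i]]_(m,n)) (B : 'M[R[i]]_(p,q)) :
  adjmx (A *t B) = adjmx A *t adjmx B.
Proof. by rewrite /adjmx trmx_tens map_mxT. Qed.

Lemma sqmodM (x y : R[i]) : sqmod (x * y) = sqmod x * sqmod y.
Proof. case: x => a b; case: y => c d; rewrite /sqmod /=. ring. Qed.

Lemma sqmod_ge0 (x : R[i]) : 0 <= sqmod x.
Proof. by rewrite /sqmod addr_ge0 // sqr_ge0. Qed.

Lemma cliffC_tens d1 d2 (I1 I2 : finType) (D1 : I1 -> 'M[R[i]]_d1)
  (D2 : I2 -> 'M[R[i]]_d2) U V a b :
  cliffC (tens_family D1 D2) (U *t V) a b =
  cliffC D1 U a.1 b.1 * cliffC D2 V a.2 b.2.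
Proof.
rewrite /cliffC /tens_family !adj_tens !tensmx_mul tr_tens natrM invfM.
ring.
Qed.

Lemma sum_tens d1 d2 (I1 I2 : finType) (D1 : I1 -> 'M[R[i]]_d1)
  (D2 : I2 -> 'M[R[i]]_d2) U V alpha :
  \sum_(a : I1 * I2) \sum_(b : I1 * I2)
     powR (cliffD (tens_family D1 D2) (U *t V) a b) alpha =
  (\sum_a \sum_b powR (cliffD D1 U a b) alpha) *
  (\sum_a \sum_b powR (cliffD D2 V a b) alpha).
Proof.
under eq_bigr => a _ do under eq_bigr => b _ do
  rewrite /cliffD cliffC_tens sqmodM powRM ?sqmod_ge0 //.
symmetry; rewrite big_distrlr pair_bigA /=; apply: eq_bigr => a _.
by rewrite big_distrlr pair_bigA /=.
Qed.

Lemma wh_dim_gt0 (ls : seq nat) : all (fun dL => 0 < dL)%N ls -> (0 < wh_dim ls)%N.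
Proof. by elim: ls => //= x l IH /andP[hx hl]; rewrite muln_gt0 hx IH. Qed.

End Aux.


(* C^{d1} = C^{wh_dim ls1} and C^{d2} = C^{wh_dim ls2} are (multi-)qudit
   systems with local dimensions ls1, ls2 and their Weyl-Heisenberg
   displacement operators wh ls1, wh ls2; the composite system uses the
   operators D_{a1} (x) D_{a2} (tens_family). *)
Theorem theorem3 (R : realType) (alpha : R) (ls1 ls2 : seq nat)
  (U : 'M[R[i]]_(wh_dim ls1)) (V : 'M[R[i]]_(wh_dim ls2)) :
  0 < alpha -> alpha != 1 ->
  all (fun dL => 0 < dL)%N ls1 -> all (fun dL => 0 < dL)%N ls2 ->
  unitary U -> unitary V ->
  cliff_entropy alpha (tens_family (@wh R ls1) (@wh R ls2)) (U *t V) =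
    cliff_entropy alpha (@wh R ls1) U + cliff_entropy alpha (@wh R ls2) V
    - (alpha - 1) * cliff_entropy alpha (@wh R ls1) U
                  * cliff_entropy alpha (@wh R ls2) V.
Proof.
Proof.
move=> ha ha1 h1 h2 _ _.
rewrite /cliff_entropy sum_tens.
rewrite /tens_family natrX natrM natrX natrX.
set a := alpha - 1.
have ha0 : a != 0 by rewrite subr_eq0.
set d1 := (wh_dim ls1)%:R; set d2 := (wh_dim ls2)%:R.
rewrite exprMn invfM.
field.
have n1 : (wh_dim ls1 != 0)%N by rewrite -lt0n wh_dim_gt0.
have n2 : (wh_dim ls2 != 0)%N by rewrite -lt0n wh_dim_gt0.
by rewrite ha0 !pnatr_eq0 n1 n2.
Qed.
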